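(* For every fixed integer $\Delta\ge 2$ there is a constant $\kappa=\kappa(\Delta)>0$ such that for arbitrarily large values of $|V|$ there exists a partition exchange economy with cycle bound $\Delta$ and only $n=3$ organizations whose $\lfloor\kappa|V|\rfloor$-supplemented core is empty. (That is, $\Omega(|V|)$ additional altruistic donors may be necessary.)
   Context: A partition exchange economy consists of organizations $N=\{1,\dots,n\}$; pairwise disjoint finite sets $V^1,\dots,V^n$, $V=\bigcup_iV^i$; patient sets $U^i\subseteq V^i$; a directed compatibility graph $\mathcal G=(V,E)$; and a cycle bound $\Delta$. An exchange among $W\subseteq V$ is a set of vertex-disjoint directed cycles of length at most $\Delta$ in $\mathcal G[W]$; $u_i(\mathcal E)$ is the number of vertices of $U^i$ lying on cycles of $\mathcal E$. Given a finite set $V^0$ of new vertices (additional altruistic donors, in no organization), $\mathcal G^{+V^0}$ adds these vertices, an arc from every other vertex into each $a\in V^0$, and for each $a\in V^0$ arcs from $a$ to an arbitrarily chosen set of vertices; exchanges in $\mathcal G^{+V^0}$ are sets of vertex-disjoint cycles of length $\le\Delta$ in it. A nonempty coalition $P\subseteq N$ blocks an exchange $\mathcal E$ if some exchange $\mathcal E'$ among $\bigcup_{i\in P}V^i$ (in $\mathcal G$) has $u_i(\mathcal E')>u_i(\mathcal E)$ for all $i\in P$. An exchange of $\mathcal G^{+V^0}$ blocked by no coalition is in the $V^0$-supplemented core. The $d$-supplemented core is nonempty if for some $V^0$ with $|V^0|\le d$ and some choice of its out-arcs the $V^0$-supplemented core is nonempty; otherwise it is empty. *)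

(* Defs.v *)
From mathcomp Require Import all_boot all_order all_algebra.

Import Order.TTheory GRing.Theory Num.Theory.

(* Vertices are 'I_nV; org v is the unique
   organization (in 'I_nOrg) whose vertex set V^i contains v, so the V^i are
   pairwise disjoint and cover V.  U^i = patients :&: V^i.  compat is the arc
   relation of the directed compatibility graph. *)
Record economy := Economy {
  nV : nat;
  nOrg : nat;
  org : 'I_nV -> 'I_nOrg;
  patients : {set 'I_nV};
  compat : rel 'I_nV }.
Arguments org : clear implicits.
Arguments patients : clear implicits.
Arguments compat : clear implicits.

Definition dcycle {T : eqType} (e : rel T) (D : nat) (c : seq T) : bool :=
  [&& 0 < size c, size c <= D, uniq c & cycle e c].

Definition exchange {T : eqType} (e : rel T) (D : nat) (W : pred T)
  (X : seq (seq T)) : bool :=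
  [&& all (dcycle e D) X, uniq (flatten X) & all W (flatten X)].

Definition isPatient (G : economy) (i : 'I_(nOrg G)) (v : 'I_(nV G)) : bool :=
  (v \in patients G) && (org G v == i).

Definition util (G : economy) (i : 'I_(nOrg G)) (X : seq (seq 'I_(nV G))) : nat :=
  count (isPatient G i) (flatten X).

(* The supplemented graph G^{+V^0} with V^0 = 'I_d (vertices inr a):
   original arcs, an arc from every other vertex into each new vertex a,
   and arcs from a to the chosen set out a of original vertices (arcs from a
   to other new vertices are present anyway). *)
Definition supp_rel (G : economy) (d : nat) (out : 'I_d -> {set 'I_(nV G)}) :
  rel ('I_(nV G) + 'I_d) :=
  fun x y =>
    match x, y with
    | inl u, inl v => compat G u v
    | inl _, inr _ => true
    | inr a, inr b => a != b
    | inr a, inl v => v \in out a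
    end.

Definition supp_patient (G : economy) (d : nat) (i : 'I_(nOrg G)) :
  pred ('I_(nV G) + 'I_d) :=
  fun x => if x is inl v then isPatient G i v else false.

Definition usupp (G : economy) (d : nat) (i : 'I_(nOrg G))
  (X : seq (seq ('I_(nV G) + 'I_d))) : nat :=
  count (supp_patient G d i) (flatten X).

Definition blocks (G : economy) (D : nat) (P : {set 'I_(nOrg G)})
  (ui : 'I_(nOrg G) -> nat) : Prop :=
  P != set0 /\
  exists X' : seq (seq 'I_(nV G)),
    exchange (compat G) D (fun v => org G v \in P) X' /\
    forall i, i \in P -> ui i < util G i X'.

Definition in_supp_core (G : economy) (D d : nat) (out : 'I_d -> {set 'I_(nV G)})
  (X : seq (seq ('I_(nV G) + 'I_d))) : Prop :=
  exchange (supp_rel G d out) D predT X /\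
  forall P : {set 'I_(nOrg G)}, ~ blocks G D P (fun i => usupp G d i X).

Definition supp_core_nonempty (G : economy) (D k : nat) : Prop :=
  exists (d : nat) (out : 'I_d -> {set 'I_(nV G)}),
    d <= k /\ exists X, in_supp_core G D d out X.

(* Main.v *)
Require Import Defs.
From mathcomp Require Import all_boot all_order all_algebra.
From mathcomp Require Import zify.
Import Order.TTheory GRing.Theory Num.Theory.
Set Implicit Arguments. Unset Strict Implicit. Unset Printing Implicit Defensive.

Section Cyc.
Variables (T : eqType) (e : rel T) (Dl : nat) (X : seq (seq T)).
Hypothesis HX : all (dcycle e Dl) X.
Hypothesis HU : uniq (flatten X).

Definition cyc x := nth [::] X (find (fun c => x \in c) X).

Lemma cycP x : x \in flatten X -> cyc x \in X /\ x \in cyc x.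
Proof.
move=> /flattenP [c cX xc].
have hh : has (fun c => x \in c) X by apply/hasP; exists c.
split; first by rewrite /cyc mem_nth // -has_find.
exact: (nth_find [::] hh).
Qed.

Lemma cyc_uniq c1 c2 x : c1 \in X -> c2 \in X -> x \in c1 -> x \in c2 -> c1 = c2.
Proof.
move: HU; elim: X => [|c X' IH] //= U.
move: U; rewrite cat_uniq => /and3P [_ hc U'].
rewrite !inE => /orP [/eqP-> | h1] /orP [/eqP-> | h2] x1 x2 //.
- case/negP: hc; apply/hasP; exists x => //; apply/flattenP; by exists c2.
- case/negP: hc; apply/hasP; exists x => //; apply/flattenP; by exists c1.
- exact: IH.
Qed.

Lemma cyc_eq c x : c \in X -> x \in c -> cyc x = c.
Proof.
move=> cX xc; have xF : x \in flatten X by apply/flattenP; exists c.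
have [h1 h2] := cycP xF; exact: (cyc_uniq h1 cX h2 xc).
Qed.

Lemma cyc_dcycle x : x \in flatten X -> dcycle e Dl (cyc x).
Proof. by move=> /cycP [h _]; move/allP: HX; apply. Qed.

Definition nxt x := next (cyc x) x.

Lemma nxt_cyc x : x \in flatten X -> nxt x \in cyc x.
Proof. by move=> /cycP [_ h]; rewrite mem_next. Qed.

Lemma nxt_F x : x \in flatten X -> nxt x \in flatten X.
Proof. move=> h; have [h1 _] := cycP h; apply/flattenP; exists (cyc x) => //; exact: nxt_cyc. Qed.

Lemma cyc_nxt x : x \in flatten X -> cyc (nxt x) = cyc x.
Proof. move=> h; have [h1 _] := cycP h; exact: cyc_eq h1 (nxt_cyc h). Qed.

Lemma nxt_e x : x \in flatten X -> e x (nxt x).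
Proof.
move=> h; have [_ h2] := cycP h; move: (cyc_dcycle h) => /and4P [_ _ _ hc].
exact: next_cycle hc h2.
Qed.

Lemma prev_nxt x : x \in flatten X -> prev (cyc (nxt x)) (nxt x) = x.
Proof.
move=> h; rewrite cyc_nxt //; move: (cyc_dcycle h) => /and4P [_ _ hu _].
exact: prev_next.
Qed.

Lemma nxt_inj x y : x \in flatten X -> y \in flatten X -> nxt x = nxt y -> x = y.
Proof. by move=> hx hy e'; rewrite -(prev_nxt hx) -(prev_nxt hy) e'. Qed.

Lemma cyc_size x : x \in flatten X -> size (cyc x) <= Dl.
Proof. by move=> h; move: (cyc_dcycle h) => /and4P []. Qed.

Lemma iter_nxt_cyc x k : x \in flatten X -> iter k nxt x \in cyc x.
Proof.
move=> h; elim: k => [|k IH] /=; first by have [] := cycP h.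
have hF : iter k nxt x \in flatten X by apply/flattenP; exists (cyc x) => //; have [] := cycP h.
rewrite -(cyc_eq (proj1 (cycP h)) IH); exact: nxt_cyc.
Qed.
End Cyc.

Section Cons.
Variables (D m : nat).
Hypothesis HD : (2 <= D)%N.
Hypothesis Hm : (0 < m)%N.

Definition L := D.*2.+1.
Definition NC := (4 * m).-1.+1.
Definition NV := (NC * L).-1.+1.
Lemma L_ge5 : (5 <= L)%N. Proof. rewrite /L; lia. Qed.
Lemma NCE : NC = 4 * m. Proof. rewrite /NC; lia. Qed.
Lemma NVE : NV = NC * L. Proof. rewrite /NV NCE /L; nia. Qed.

Definition nx t := if t.+1 < L then t.+1 else 0.
Definition pv t := if t == 0 then L.-1 else t.-1.
Definition tp j := if j < m then 3 else if j < m.*2 then 0 else if j < 3 * m then 1 else 2.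
Definition owner j q :=
  if tp j == 3 then (if q == 0 then 0 else if q == 1 then 1 else 2)
  else if q == 0 then (tp j).+1 %% 3 else tp j.
Definition comp (v : nat) := v %/ L.
Definition pos (v : nat) := v %% L.
Definition orgF (v : 'I_NV) : 'I_3 := inord (owner (comp v) (pos v)).
Definition compatF (v w : 'I_NV) : bool :=
  (comp v == comp w) && ((pos w == nx (pos v)) || (pos v == nx (pos w))).
Definition G := @Economy NV 3 orgF setT compatF.
Definition vtx j t : 'I_NV := inord (j * L + t).

Lemma L_gt0 : (0 < L)%N. Proof. by []. Qed.

Lemma vtxK j t : (j < NC)%N -> (t < L)%N -> (vtx j t : nat) = j * L + t.
Proof.
move=> hj ht; rewrite /vtx inordK //.
have : (j * L + t < NC * L)%N.
  apply: (@leq_trans (j * L + L)); first by rewrite ltn_add2l.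
  by rewrite -mulSnr leq_mul2r hj orbT.
rewrite /NV; lia.
Qed.

Lemma comp_vtx j t : (j < NC)%N -> (t < L)%N -> comp (vtx j t) = j.
Proof. by move=> hj ht; rewrite vtxK // /comp divnMDl // divn_small // addn0. Qed.
Lemma pos_vtx j t : (j < NC)%N -> (t < L)%N -> pos (vtx j t) = t.
Proof. by move=> hj ht; rewrite vtxK // /pos modnMDl modn_small. Qed.
Lemma pos_lt (v : nat) : (pos v < L)%N. Proof. by rewrite /pos ltn_mod. Qed.
Lemma comp_lt (v : 'I_NV) : (comp v < NC)%N.
Proof. by rewrite /comp ltn_divLR // -NVE. Qed.
Lemma vtx_dec (v : 'I_NV) : v = vtx (comp v) (pos v).
Proof. by apply: val_inj => /=; rewrite vtxK ?comp_lt ?pos_lt // /comp /pos -divn_eq. Qed.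
Lemma vtx_inj j t j' t' : (j < NC)%N -> (t < L)%N -> (j' < NC)%N -> (t' < L)%N ->
  vtx j t = vtx j' t' -> j = j' /\ t = t'.
Proof.
move=> h1 h2 h3 h4 e; split.
  by rewrite -(comp_vtx h1 h2) -(comp_vtx h3 h4) e.
by rewrite -(pos_vtx h1 h2) -(pos_vtx h3 h4) e.
Qed.

Ltac cases := repeat (match goal with |- context [if ?c then _ else _] =>
  lazymatch c with context [if _ then _ else _] => fail | _ => let H := fresh "Hc" in case H : c end end).
Lemma nx_lt t : (nx t < L)%N. Proof. rewrite /nx; case: ifP => //. Qed.
Lemma pv_lt t : (t < L)%N -> (pv t < L)%N. Proof. move=> ?; unfold nx, pv, L in *; cases; lia. Qed.
Lemma nx_pv t : (t < L)%N -> nx (pv t) = t.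
Proof. move=> ?; unfold nx, pv, L in *; cases; lia. Qed.
Lemma pv_nx t : (t < L)%N -> pv (nx t) = t.
Proof. move=> ?; unfold nx, pv, L in *; cases; lia. Qed.
Lemma nx_neq t : (t < L)%N -> nx t != t.
Proof. move=> ?; unfold nx, pv, L in *; cases; lia. Qed.
Lemma nx2_neq t : (t < L)%N -> nx (nx t) != t.
Proof. move=> ?; unfold nx, pv, L in *; cases; lia. Qed.
Lemma pv2_neq t : (t < L)%N -> pv (pv t) != t.
Proof. move=> ?; unfold nx, pv, L in *; cases; lia. Qed.
Lemma nx_neq_pv t : (t < L)%N -> nx t != pv t.
Proof. move=> ?; unfold nx, pv, L in *; cases; lia. Qed.

Definition g2 t := nx (nx t).

Lemma g2_step x : (x.+2 < L)%N -> g2 x = x.+2.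
Proof. move=> h; rewrite /g2 /nx; unfold L in *; cases; lia. Qed.

Lemma prop_up (P : nat -> Prop) : (forall t, (t < L)%N -> P t -> P (g2 t)) ->
  forall s i, (s + i.*2 < L)%N -> P s -> P (s + i.*2).
Proof.
move=> hP s; elim=> [|i IH] h Ps; first by rewrite addn0.
have h' : (s + i.*2 < L)%N by move: h; rewrite doubleS; lia.
have := hP _ h' (IH h' Ps); rewrite g2_step; last by move: h; rewrite doubleS; lia.
by rewrite doubleS addnS addnS.
Qed.

Lemma g2_last : g2 D.*2 = 1.
Proof. rewrite /g2 /nx; unfold L in *; cases; lia. Qed.
Lemma g2_last' : g2 D.*2.-1 = 0.
Proof. rewrite /g2 /nx; unfold L in *; cases; lia. Qed.

Lemma reach_all (P : nat -> Prop) : (forall t, (t < L)%N -> P t -> P (g2 t)) ->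
  P 0 -> forall t, (t < L)%N -> P t.
Proof.
move=> hP P0 t ht.
have PD : P D.*2 by have := @prop_up P hP 0 D; rewrite add0n; apply => //.
have P1 : P 1 by rewrite -g2_last; apply: hP => //.
have ht' := ht; rewrite -[t]odd_double_half in ht' *; case: (odd t) ht' => /= ht'.
  by apply: (prop_up hP).
by have := @prop_up P hP 0 t./2; rewrite add0n; apply.
Qed.

Lemma reach_zero (P : nat -> Prop) : (forall t, (t < L)%N -> P t -> P (g2 t)) ->
  forall t, (t < L)%N -> P t -> P 0.
Proof.
move=> hP t ht Pt.
have Ht := odd_double_half t.
have PLm : P D.*2.-1.
  case ho : (odd t) Ht => /= Ht.
    have -> : D.*2.-1 = t + (D - t./2).-1.*2 by move: ht; rewrite /L; lia.
    apply: (prop_up hP) => //; unfold L in *; lia.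
  have PD : P D.*2.
    have -> : D.*2 = t + (D - t./2).*2 by move: ht; rewrite /L; lia.
    apply: (prop_up hP) => //; unfold L in *; lia.
  have P1 : P 1 by rewrite -g2_last; apply: hP => //.
  have -> : D.*2.-1 = 1 + (D.-1).*2 by lia.
  apply: (prop_up hP) => //; unfold L in *; lia.
rewrite -g2_last'; apply: hP => //; unfold L in *; lia.
Qed.
Section Upper.
Variables (d : nat) (out : 'I_d -> {set 'I_NV}) (X : seq (seq ('I_NV + 'I_d))).
Hypothesis HX : exchange (supp_rel G d out) D predT X.

Let F := flatten X.
Lemma HXa : all (dcycle (supp_rel G d out) D) X. Proof. by case/and3P: HX. Qed.
Lemma HXu : uniq F. Proof. by case/and3P: HX. Qed.
Let nx' := nxt X.

Lemma shape j t : (j < NC)%N -> (t < L)%N -> inl (vtx j t) \in F ->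
  (exists a, nx' (inl (vtx j t)) = inr a) \/
  nx' (inl (vtx j t)) = inl (vtx j (nx t)) \/ nx' (inl (vtx j t)) = inl (vtx j (pv t)).
Proof.
move=> hj ht hF; have := nxt_e HXa hF; rewrite /nx'.
case: (nxt X (inl (vtx j t))) => [w|a] /=; last by left; exists a.
rewrite /compatF comp_vtx // pos_vtx // => /andP [/eqP hc /orP [/eqP hp | /eqP hp]]; right.
  by left; rewrite (vtx_dec w) -hc hp.
by right; rewrite (vtx_dec w) -hc hp pv_nx // pos_lt.
Qed.

Lemma no_rot j (st : nat -> nat) : (j < NC)%N ->
  (forall t, (t < L)%N -> st t < L)%N ->
  (forall t, (t < L)%N -> inl (vtx j t) \in F /\ nx' (inl (vtx j t)) = inl (vtx j (st t))) ->
  (forall t, (t < L)%N -> exists i, t = iter i st 0) -> False.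
Proof.
move=> hj hst hnx hreach.
have F0 : inl (vtx j 0) \in F by have [] := hnx 0 L_gt0.
set c := cyc X (inl (vtx j 0)).
have hin : forall i, (iter i st 0 < L)%N /\ inl (vtx j (iter i st 0)) \in c.
  elim=> [|i [IH1 IH2]] /=; first by split => //; have [] := cycP F0.
  split; first exact: hst.
  have [hF hn] := hnx _ IH1.
  have cX : c \in X by have [] := cycP F0.
  rewrite -hn -(cyc_eq HXu cX IH2); exact: nxt_cyc hF.
have : (size [seq (inl (vtx j t) : 'I_NV + 'I_d) | t <- iota 0 L] <= size c)%N.
  apply: uniq_leq_size.
    rewrite map_inj_in_uniq ?iota_uniq // => x y; rewrite !mem_iota /= => hx hy [] e.
    by have [] := vtx_inj hj hx hj hy e.
  move=> z /mapP [t]; rewrite mem_iota /= => ht ->.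
  have [i ->] := hreach _ ht; exact: (hin i).2.
rewrite size_map size_iota.
have := cyc_size HXa F0; rewrite -/c; unfold L in *; move=> h1 h2; have := leq_trans h2 h1; lia.
Qed.

Lemma iter_nx t : (t < L)%N -> iter t nx 0 = t.
Proof.
elim: t => [|t IH] //= h; rewrite IH; last lia.
rewrite /nx; unfold L in *; cases; lia.
Qed.

Lemma iter_pv i : (0 < i <= L)%N -> iter i pv 0 = L - i.
Proof.
elim: i => [|i IH] //= h; case: i IH h => [|i] IH h.
  by rewrite /pv /=; unfold L; lia.
rewrite IH; last lia.
rewrite /pv; unfold L in *; cases; lia.
Qed.

Lemma full_comp j : (j < NC)%N -> (forall t, (t < L)%N -> inl (vtx j t) \in F) ->
  exists t a, (t < L)%N /\ nx' (inl (vtx j t)) = inr a.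
Proof.
move=> hj hall.
case hh : (has (fun t => if nx' (inl (vtx j t)) is inr _ then true else false) (iota 0 L)).
  case/hasP: hh => t; rewrite mem_iota /= => ht.
  case e : (nx' _) => [w|a] // _; by exists t, a.
have hno : forall t, (t < L)%N -> exists w, nx' (inl (vtx j t)) = inl w.
  move=> t ht; move/hasPn: hh => /(_ t); rewrite mem_iota /= ht => /(_ isT).
  case: (nx' _) => [w|a] //; by exists w.
have sh : forall t, (t < L)%N -> nx' (inl (vtx j t)) = inl (vtx j (nx t)) \/
                               nx' (inl (vtx j t)) = inl (vtx j (pv t)).
  move=> t ht; case: (shape hj ht (hall _ ht)) => // [[a ea]].
  by have [w ew] := hno _ ht; rewrite ea in ew.
pose f t := nx' (inl (vtx j t)) == inl (vtx j (nx t)).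
have ninj : forall t t', (t < L)%N -> (t' < L)%N -> nx' (inl (vtx j t)) = nx' (inl (vtx j t')) -> t = t'.
  move=> t t' ht ht' e; have := nxt_inj HXa HXu (hall _ ht) (hall _ ht') e.
  by case=> /(vtx_inj hj ht hj ht') [].
have stepf : forall t, (t < L)%N -> f t -> f (g2 t).
  move=> t ht /eqP ft; rewrite /f /g2; have hg : (nx (nx t) < L)%N by exact: nx_lt.
  case: (sh _ hg) => [->//|e2].
  have e3 : nx' (inl (vtx j (nx (nx t)))) = nx' (inl (vtx j t)) by rewrite e2 ft pv_nx // nx_lt.
  by have := ninj _ _ hg ht e3; move/eqP; rewrite (negbTE (nx2_neq ht)).
have notf : forall t, (t < L)%N -> ~~ f t -> nx' (inl (vtx j t)) = inl (vtx j (pv t)).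
  move=> t ht; rewrite /f; case: (sh _ ht) => [->|->] //; by rewrite eqxx.
case f0 : (f 0).
  have allf : forall t, (t < L)%N -> f t.
    exact: (reach_all (P := fun t => f t)).
  exfalso; apply: (@no_rot j nx hj) => [t _|t ht|t ht]; first exact: nx_lt.
    by split; [exact: hall | apply/eqP; exact: allf].
  by exists t; rewrite iter_nx.
have allnf : forall t, (t < L)%N -> ~~ f t.
  move=> t ht; apply/negP => ft.
  by have := reach_zero (P := fun t => f t) stepf ht ft; rewrite f0.
exfalso; apply: (@no_rot j pv hj) => [t ht|t ht|t ht]; first exact: pv_lt.
  by split; [exact: hall | exact: notf (allnf _ ht)].
case: t ht => [|t] ht; first by exists 0.
exists (L - t.+1); rewrite iter_pv; unfold L in *; lia.
Qed.
End Upper.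
Definition getl (T : Type) (x : 'I_NV + T) := if x is inl v then Some v else None.
Definition cmp (v : 'I_NV) : 'I_NC := inord (comp v).
Lemma cmp_val v : (cmp v : nat) = comp v.
Proof. by rewrite /cmp inordK // -[X in (_ < X)%N]/NC comp_lt. Qed.

Section Count.
Variables (d : nat) (out : 'I_d -> {set 'I_NV}) (X : seq (seq ('I_NV + 'I_d))).
Hypothesis HX : exchange (supp_rel G d out) D predT X.

Lemma total_bound :
  (count (fun x => getl x) (flatten X) <= NV - NC + d)%N.
Proof.
have HXa : all (dcycle (supp_rel G d out) D) X by case/and3P: HX.
have HXu : uniq (flatten X) by case/and3P: HX.
set F := flatten X.
pose Cov := [set v : 'I_NV | inl v \in F].
have c1 : (count (fun x => getl x) F <= #|Cov|)%N.
  rewrite -size_pmap.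
  have U : uniq (pmap (@getl 'I_d) F) by apply: (pmap_uniq (g := inl)) => //; case.
  rewrite -(card_uniqP U); apply: subset_leq_card; apply/subsetP => v.
  rewrite mem_pmap inE => /mapP [x xF]; case: x xF => // w wF [->] //.
pose Full := [set j : 'I_NC | [forall t : 'I_L, inl (vtx j t) \in F]].
pose gmap (a : 'I_d) : 'I_NC := cmp (odflt (vtx 0 0) (getl (prev (cyc X (inr a)) (inr a)))).
have c2 : (#|Full| <= d)%N.
  apply: (@leq_trans #|[set gmap a | a in 'I_d]|); last by rewrite (leq_trans (leq_imset_card _ _)) // card_ord.
  apply: subset_leq_card; apply/subsetP => j; rewrite inE => /forallP hall.
  have hj : (j < NC)%N by [].
  have [t [a [ht ea]]] := full_comp HX hj (fun t ht => hall (Ordinal ht)).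
  apply/imsetP; exists a => //.
  have tF : inl (vtx j t) \in F := hall (Ordinal ht).
  rewrite /gmap; have := prev_nxt HXa HXu tF; rewrite /nxt in ea *; rewrite ea => ->.
  by apply: val_inj; rewrite /= cmp_val comp_vtx.
pose wmap (j : 'I_NC) : 'I_NV := vtx j (odflt ord0 [pick t : 'I_L | inl (vtx j t) \notin F]).
have wnot : forall j, j \notin Full -> wmap j \notin Cov.
  move=> j; rewrite inE negb_forall => /existsP [t0 ht0].
  rewrite /wmap; case: pickP => [t /= ht|/(_ t0)]; last by rewrite ht0.
  by rewrite inE.
have wcmp : forall j : 'I_NC, cmp (wmap j) = j.
  by move=> j; apply: val_inj; rewrite /= cmp_val comp_vtx.
have c3 : Cov \subset ~: [set wmap j | j in ~: Full].
  apply/subsetP => v vC; rewrite inE; apply/imsetP => [[j]]; rewrite inE => jn ev.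
  by move: (wnot _ jn); rewrite -ev vC.
have c4 : #|[set wmap j | j in ~: Full]| = #|~: Full|.
  apply: card_in_imset => j1 j2 _ _ e; by rewrite -(wcmp j1) -(wcmp j2) e.
have := subset_leq_card c3.
have := cardsC [set wmap j | j in ~: Full]; rewrite card_ord c4.
have := cardsC Full; rewrite card_ord.
have : (#|Full| <= NC)%N by rewrite -[X in (_ <= X)%N]card_ord max_card.
have : (NC <= NV)%N by rewrite NVE leq_pmulr.
lia.
Qed.
End Count.
Fixpoint arc j s k : seq (seq 'I_NV) :=
  if k is k'.+1 then [:: vtx j s; vtx j (nx s)] :: arc j (nx (nx s)) k' else [::].

Lemma flatten_arc j s k : flatten (arc j s k) = map (vtx j) (traject nx s k.*2).
Proof. by elim: k s => [|k IH] s //=; rewrite IH. Qed.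

Lemma arc_mem j s k x : (s < L)%N -> x \in arc j s k ->
  exists2 t, (t < L)%N & x = [:: vtx j t; vtx j (nx t)].
Proof.
elim: k s => [|k IH] s hs //=; rewrite inE => /orP [/eqP ->|h]; first by exists s.
by apply: IH h; apply: nx_lt.
Qed.

Lemma traject_lt s n t : (s < L)%N -> t \in traject nx s n -> (t < L)%N.
Proof.
elim: n s => [|n IH] s hs //=; rewrite inE => /orP [/eqP ->//|]; apply: IH; exact: nx_lt.
Qed.

Definition Xp (ps : nat -> nat * nat) : seq (seq 'I_NV) :=
  flatten (map (fun j => arc j (ps j).1 (ps j).2) (iota 0 NC)).
Definition trj (ps : nat -> nat * nat) j := traject nx (ps j).1 (ps j).2.*2.

Lemma flatten_Xp ps : flatten (Xp ps) =
  flatten (map (fun j => map (vtx j) (trj ps j)) (iota 0 NC)).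
Proof.
rewrite /Xp; elim: (iota 0 NC) => [|j s IH] //=.
by rewrite flatten_cat IH flatten_arc.
Qed.

Lemma uniq_blocks (h : nat -> seq 'I_NV) a n :
  (forall j, (a <= j < a + n)%N -> uniq (h j) /\ forall x, x \in h j -> comp x = j) ->
  uniq (flatten (map h (iota a n))).
Proof.
elim: n a => [|n IH] a hh //=; rewrite cat_uniq.
have [u1 c1] : uniq (h a) /\ (forall x, x \in h a -> comp x = a) by apply: hh; lia.
rewrite u1 IH ?andbT; last by move=> j hj; apply: hh; lia.
apply/hasPn => x /flattenP [s /mapP [j]]; rewrite mem_iota => /andP [hj1 hj2] -> xh.
apply/negP => xa; have := c1 _ xa.
have [_ c2] : uniq (h j) /\ (forall x, x \in h j -> comp x = j) by apply: hh; lia.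
rewrite (c2 _ xh); lia.
Qed.

Definition valid_ps (P : pred 'I_3) (ps : nat -> nat * nat) :=
  forall j, (j < NC)%N -> [/\ ((ps j).1 < L)%N, uniq (trj ps j) &
     forall t, t \in trj ps j -> P (inord (owner j t))].

Lemma Xp_exchange (P : pred 'I_3) ps : valid_ps P ps ->
  exchange compatF D (fun v => P (orgF v)) (Xp ps).
Proof.
move=> hv; apply/and3P; split.
- apply/allP => x /flattenP [s /mapP [j]]; rewrite mem_iota add0n /= => hj -> xs.
  have [h1 _ _] := hv j hj.
  have [t ht ->] := arc_mem h1 xs.
  rewrite /dcycle /= HD /= andbT; apply/and3P; split.
  + rewrite inE; apply/eqP => /(vtx_inj hj ht hj (nx_lt t)) [_ e].
    by move: (nx_neq ht); rewrite -e eqxx.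
  + by rewrite /compatF !comp_vtx ?nx_lt // !pos_vtx ?nx_lt // !eqxx.
  + by rewrite /compatF !comp_vtx ?nx_lt // !pos_vtx ?nx_lt // !eqxx orbT.
- rewrite flatten_Xp; apply: uniq_blocks => j; rewrite add0n => /andP [_ hj].
  have [h1 h2 _] := hv j hj; split.
    rewrite map_inj_in_uniq // => x y xs ys e.
    by have [] := vtx_inj hj (traject_lt h1 xs) hj (traject_lt h1 ys) e.
  by move=> x /mapP [t ts ->]; rewrite comp_vtx // (traject_lt h1 ts).
- rewrite flatten_Xp; apply/allP => x /flattenP [s /mapP [j]]; rewrite mem_iota add0n /= => hj ->.
  have [h1 _ h3] := hv j hj.
  move=> /mapP [t ts ->]; have tl := traject_lt h1 ts; rewrite /orgF comp_vtx // pos_vtx //; exact: h3.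
Qed.

Lemma owner_le j t : (owner j t <= 2)%N.
Proof. rewrite /owner /tp; cases => //; rewrite ?modn_small //; apply: ltnW; rewrite ltn_mod. Qed.

Lemma util_Xp ps (i : 'I_3) : (forall j, (j < NC)%N -> ((ps j).1 < L)%N) ->
  util G i (Xp ps) = sumn (map (fun j => count (fun t => owner j t == i) (trj ps j)) (iota 0 NC)).
Proof.
move=> hv; rewrite /util flatten_Xp count_flatten -map_comp.
apply/congr1/eq_in_map => j; rewrite mem_iota add0n /= => hj /=.
rewrite count_map; apply: eq_in_count => t ts /=.
have tl := traject_lt (hv j hj) ts; rewrite /isPatient /= inE /orgF comp_vtx // pos_vtx //.
apply/eqP/eqP => [<-|e]; first by rewrite inordK // ltnS owner_le.
by apply: val_inj; rewrite /= inordK // ltnS owner_le.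
Qed.
Lemma traject_iota s n : (s + n <= L)%N -> traject nx s n = iota s n.
Proof.
elim: n s => [|n IH] s //= h.
case: n IH h => [|n] IH h //.
have -> : nx s = s.+1 by rewrite /nx; case: ltnP => //; lia.
by rewrite IH //; lia.
Qed.

Lemma traject_wrap : traject nx 2 D.*2 = rcons (iota 2 (D.*2.-1)) 0.
Proof.
have -> : D.*2 = (D.*2.-1).+1 by lia.
rewrite trajectSr traject_iota; last by rewrite /L; lia.
congr rcons; have h : forall k, (k <= D.*2.-2)%N -> iter k nx 2 = k.+2.
  elim=> [|k IH] //= hk; rewrite IH; last lia.
  rewrite /nx; unfold L in *; cases; lia.
have -> : D.*2.-1 = (D.*2.-2).+1 by lia.
rewrite iterS h //; rewrite /nx; unfold L in *; cases; lia.
Qed.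

Lemma sumn_const (h : nat -> nat) a n c :
  (forall j, (a <= j < a + n)%N -> h j = c) -> sumn (map h (iota a n)) = n * c.
Proof.
elim: n a => [|n IH] a hh //=; rewrite IH; last by move=> j hj; apply: hh; lia.
rewrite hh; last lia. by rewrite mulSn.
Qed.

Lemma count_const (P : pred nat) a n (b : bool) :
  (forall t, (a <= t < a + n)%N -> P t = b) -> count P (iota a n) = b * n.
Proof.
elim: n a => [|n IH] a hh /=; first by rewrite muln0.
rewrite IH; last by move=> t ht; apply: hh; lia.
rewrite hh; last lia. by rewrite mulnS.
Qed.

Lemma sumn_split (h : nat -> nat) a n1 n2 :
  sumn (map h (iota a (n1 + n2))) = sumn (map h (iota a n1)) + sumn (map h (iota (a + n1) n2)).
Proof. by rewrite iotaD map_cat sumn_cat. Qed.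

Lemma own_tri j t : (j < m)%N -> owner j t = if t == 0 then 0 else if t == 1 then 1 else 2.
Proof. by move=> h; rewrite /owner /tp h. Qed.
Lemma own_T0 j t : (m <= j < m.*2)%N -> owner j t = if t == 0 then 1 else 0.
Proof. move=> /andP [h1 h2]; rewrite /owner /tp ltnNge h1 /= h2 /=; by case: (t == 0). Qed.
Lemma own_T1 j t : (m.*2 <= j < 3 * m)%N -> owner j t = if t == 0 then 2 else 1.
Proof.
move=> /andP [h1 h2]; rewrite /owner /tp; have -> : (j < m)%N = false by lia.
by rewrite ltnNge h1 /= h2 /=; case: (t == 0).
Qed.
Lemma own_T2 j t : (3 * m <= j)%N -> owner j t = if t == 0 then 0 else 2.
Proof.
move=> h; rewrite /owner /tp; have -> : (j < m)%N = false by lia.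
have -> : (j < m.*2)%N = false by lia.
by rewrite ltnNge h /=; case: (t == 0).
Qed.

Lemma inord_own j t : ((inord (owner j t) : 'I_3) : nat) = owner j t.
Proof. by rewrite inordK // ltnS owner_le. Qed.
Definition ps01 z j := if (j < m)%N then (0,1) else if (j < m + z)%N then (0,D)
  else if (j < 3 * m)%N then (1,D) else (0,0).

Ltac vt1 := unfold L in *; lia.
Ltac vt2 := first [done | (rewrite traject_iota ?iota_uniq //; unfold L in *; lia)].
Ltac vt3 := let t := fresh "t" in let ht := fresh "ht" in move=> t; rewrite traject_iota; [|unfold L in *; lia];
  rewrite mem_iota inord_own => ht; rewrite /owner /tp; cases; lia.
Ltac vtac := cbn [fst snd]; split; [vt1 | vt2 | first [by move=> ? | vt3]].

Lemma valid01 z : (z <= m)%N ->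
  valid_ps (fun o : 'I_3 => ((o : nat) == 0) || ((o : nat) == 1)) (ps01 z).
Proof.
move=> hz j hj; rewrite /trj /ps01; case: ifP => h1; [|case: ifP => h2; [|case: ifP => h3]].
all: vtac.
Qed.

Lemma trj_0_1 : traject nx 0 (1.*2) = [:: 0; 1].
Proof. by rewrite traject_iota //; unfold L; lia. Qed.
Lemma trj_0_D : traject nx 0 D.*2 = 0 :: 1 :: iota 2 (D.*2 - 2).
Proof.
rewrite traject_iota; last by unfold L; lia.
have e : D.*2 = (D.*2 - 2).+2 by lia.
by rewrite {1}e.
Qed.
Lemma trj_1_D : traject nx 1 D.*2 = 1 :: iota 2 (D.*2 - 1).
Proof.
rewrite traject_iota; last by unfold L; lia.
have e : D.*2 = (D.*2 - 1).+1 by lia.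
by rewrite {1}e.
Qed.
Lemma trj_2_D1 : traject nx 2 (D.-1).*2 = iota 2 (D.*2 - 2).
Proof. rewrite traject_iota; last by unfold L; lia. by congr iota; lia. Qed.
Lemma trj_2_D : traject nx 2 D.*2 = iota 2 (D.*2 - 1) ++ [:: 0].
Proof. by rewrite traject_wrap cats1; congr (rcons (iota _ _) _); lia. Qed.

Lemma count_own2 j i n : count (fun t => owner j t == i) (iota 2 n) = (owner j 2 == i) * n.
Proof.
apply: count_const => t ht; congr (_ == _).
rewrite /owner; case: (tp j == 3); have -> : (t == 0) = false by lia.
  by have -> : (t == 1) = false by lia.
by [].
Qed.

Ltac blk ps := let j := fresh "j" in let hj := fresh "hj" in
  move=> j hj; rewrite /trj /ps; cases; try lia;
  rewrite ?trj_0_1 ?trj_0_D ?trj_1_D ?trj_2_D1 ?trj_2_D ?count_cat /= ?count_own2;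
  rewrite /owner /tp; cases; lia.

Lemma util_inord (i : nat) ps : (i <= 2)%N -> (forall j, (j < NC)%N -> ((ps j).1 < L)%N) ->
  util G (inord i) (Xp ps) = sumn (map (fun j => count (fun t => owner j t == i) (trj ps j)) (iota 0 NC)).
Proof. by move=> hi hv; rewrite util_Xp // inordK. Qed.

Lemma split5 (h : nat -> nat) z : (z <= m)%N ->
  sumn (map h (iota 0 NC)) = sumn (map h (iota 0 m)) + sumn (map h (iota m z)) +
     sumn (map h (iota (m + z) (m - z))) + sumn (map h (iota (m.*2) m)) + sumn (map h (iota (3 * m) m)).
Proof.
move=> hz; have -> : NC = m + (z + ((m - z) + (m + m))) by rewrite NCE; lia.
rewrite !sumn_split !add0n; have -> : m + z + (m - z) = m.*2 by lia.
have -> : m.*2 + m = 3 * m by lia.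
by rewrite !addnA.
Qed.

Lemma util01_0 z : (z <= m)%N -> util G (inord 0) (Xp (ps01 z)) = m * D.*2 + m - z.
Proof.
move=> hz; rewrite util_inord //; last by move=> j _; rewrite /ps01; cases; rewrite /=; unfold L; lia.
rewrite (split5 _ hz).
rewrite (@sumn_const _ 0 m 1); last by blk ps01.
rewrite (@sumn_const _ m z (D.*2 - 1)); last by blk ps01.
rewrite (@sumn_const _ (m + z) (m - z) D.*2); last by blk ps01.
rewrite (@sumn_const _ (m.*2) m 0); last by blk ps01.
rewrite (@sumn_const _ (3 * m) m 0); last by blk ps01.
nia.
Qed.

Ltac trjs := rewrite ?trj_0_1 ?trj_0_D ?trj_1_D ?trj_2_D1 ?trj_2_D.
Ltac wt2 := trjs; rewrite /= ?cat_uniq ?iota_uniq /=; rewrite ?inE ?mem_iota /=; lia.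
Ltac wt3 := let t := fresh "t" in let ht := fresh "ht" in move=> t; trjs;
  rewrite ?mem_cat ?inE ?mem_iota inord_own => ht; rewrite /owner /tp; cases; lia.
Ltac wtac := cbn [fst snd]; split; [vt1 | first [done | wt2] | first [by move=> ? | wt3]].

Definition ps12 z j := if (j < m)%N then (1,D) else if (j < m.*2)%N then (0,0)
  else if (j < m.*2 + z)%N then (0,D) else (1,D).
Definition ps20 z j := if (j < m)%N then (2,D) else if (j < m.*2)%N then (1,D)
  else if (j < 3 * m)%N then (0,0) else if (j < 3 * m + z)%N then (0,D) else (1,D).
Definition ps0 j := if (j < m)%N then (0,0) else if (j < m.*2)%N then (1,D) else (0,0).
Definition ps1 j := if (j < m.*2)%N then (0,0) else if (j < 3 * m)%N then (1,D) else (0,0).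
Definition ps2 j := if (j < m)%N then (2,D.-1) else if (j < 3 * m)%N then (0,0) else (1,D).

Lemma valid12 z : (z <= m)%N ->
  valid_ps (fun o : 'I_3 => ((o : nat) == 1) || ((o : nat) == 2)) (ps12 z).
Proof. move=> hz j hj; rewrite /trj /ps12; cases; wtac. Qed.
Lemma valid20 z : (z <= m)%N ->
  valid_ps (fun o : 'I_3 => ((o : nat) == 2) || ((o : nat) == 0)) (ps20 z).
Proof. move=> hz j hj; rewrite /trj /ps20; cases; wtac. Qed.
Lemma valid0 : valid_ps (fun o : 'I_3 => ((o : nat) == 0)) ps0.
Proof. move=> j hj; rewrite /trj /ps0; cases; wtac. Qed.
Lemma valid1 : valid_ps (fun o : 'I_3 => ((o : nat) == 1)) ps1.
Proof. move=> j hj; rewrite /trj /ps1; cases; wtac. Qed.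
Lemma valid2 : valid_ps (fun o : 'I_3 => ((o : nat) == 2)) ps2.
Proof. move=> j hj; rewrite /trj /ps2; cases; wtac. Qed.

Lemma split4 (h : nat -> nat) :
  sumn (map h (iota 0 NC)) = sumn (map h (iota 0 m)) + sumn (map h (iota m m)) +
     sumn (map h (iota (m.*2) m)) + sumn (map h (iota (3 * m) m)).
Proof.
have -> : NC = m + (m + (m + m)) by rewrite NCE; lia.
rewrite !sumn_split !add0n; have -> : m + m = m.*2 by lia.
have -> : m.*2 + m = 3 * m by lia.
by rewrite !addnA.
Qed.

Lemma bsplit (h : nat -> nat) a z : (z <= m)%N ->
  sumn (map h (iota a m)) = sumn (map h (iota a z)) + sumn (map h (iota (a + z) (m - z))).
Proof. by move=> hz; rewrite -sumn_split subnKC. Qed.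

Ltac fstL ps := let j := fresh "j" in move=> j _; rewrite /ps; cases; rewrite /=; unfold L; lia.

Lemma util01_1 z : (z <= m)%N -> util G (inord 1) (Xp (ps01 z)) = m * D.*2 + m + z.
Proof.
move=> hz; rewrite util_inord //; last by fstL ps01.
rewrite (split5 _ hz).
rewrite (@sumn_const _ 0 m 1); last by blk ps01.
rewrite (@sumn_const _ m z 1); last by blk ps01.
rewrite (@sumn_const _ (m + z) (m - z) 0); last by blk ps01.
rewrite (@sumn_const _ (m.*2) m D.*2); last by blk ps01.
rewrite (@sumn_const _ (3 * m) m 0); last by blk ps01.
nia.
Qed.

Lemma util12_1 z : (z <= m)%N -> util G (inord 1) (Xp (ps12 z)) = m * D.*2 + m - z.
Proof.
move=> hz; rewrite util_inord //; last by fstL ps12.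
rewrite split4 (bsplit _ m.*2 hz).
rewrite (@sumn_const _ 0 m 1); last by blk ps12.
rewrite (@sumn_const _ m m 0); last by blk ps12.
rewrite (@sumn_const _ m.*2 z (D.*2 - 1)); last by blk ps12.
rewrite (@sumn_const _ (m.*2 + z) (m - z) D.*2); last by blk ps12.
rewrite (@sumn_const _ (3 * m) m 0); last by blk ps12.
nia.
Qed.

Lemma util12_2 z : (z <= m)%N -> util G (inord 2) (Xp (ps12 z)) = m * D.*2 - m + m * D.*2 + z.
Proof.
move=> hz; rewrite util_inord //; last by fstL ps12.
rewrite split4 (bsplit _ m.*2 hz).
rewrite (@sumn_const _ 0 m (D.*2 - 1)); last by blk ps12.
rewrite (@sumn_const _ m m 0); last by blk ps12.
rewrite (@sumn_const _ m.*2 z 1); last by blk ps12.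
rewrite (@sumn_const _ (m.*2 + z) (m - z) 0); last by blk ps12.
rewrite (@sumn_const _ (3 * m) m D.*2); last by blk ps12.
nia.
Qed.

Lemma util20_2 z : (z <= m)%N -> util G (inord 2) (Xp (ps20 z)) = m * D.*2 - m + m * D.*2 - z.
Proof.
move=> hz; rewrite util_inord //; last by fstL ps20.
rewrite split4 (bsplit _ (3 * m) hz).
rewrite (@sumn_const _ 0 m (D.*2 - 1)); last by blk ps20.
rewrite (@sumn_const _ m m 0); last by blk ps20.
rewrite (@sumn_const _ m.*2 m 0); last by blk ps20.
rewrite (@sumn_const _ (3 * m) z (D.*2 - 1)); last by blk ps20.
rewrite (@sumn_const _ (3 * m + z) (m - z) D.*2); last by blk ps20.
nia.
Qed.

Lemma util20_0 z : (z <= m)%N -> util G (inord 0) (Xp (ps20 z)) = m * D.*2 + m + z.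
Proof.
move=> hz; rewrite util_inord //; last by fstL ps20.
rewrite split4 (bsplit _ (3 * m) hz).
rewrite (@sumn_const _ 0 m 1); last by blk ps20.
rewrite (@sumn_const _ m m D.*2); last by blk ps20.
rewrite (@sumn_const _ m.*2 m 0); last by blk ps20.
rewrite (@sumn_const _ (3 * m) z 1); last by blk ps20.
rewrite (@sumn_const _ (3 * m + z) (m - z) 0); last by blk ps20.
nia.
Qed.

Lemma util0 : util G (inord 0) (Xp ps0) = m * D.*2.
Proof.
rewrite util_inord //; last by fstL ps0.
rewrite split4.
rewrite (@sumn_const _ 0 m 0); last by blk ps0.
rewrite (@sumn_const _ m m D.*2); last by blk ps0.
rewrite (@sumn_const _ m.*2 m 0); last by blk ps0.
rewrite (@sumn_const _ (3 * m) m 0); last by blk ps0.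
nia.
Qed.

Lemma util1 : util G (inord 1) (Xp ps1) = m * D.*2.
Proof.
rewrite util_inord //; last by fstL ps1.
rewrite split4.
rewrite (@sumn_const _ 0 m 0); last by blk ps1.
rewrite (@sumn_const _ m m 0); last by blk ps1.
rewrite (@sumn_const _ m.*2 m D.*2); last by blk ps1.
rewrite (@sumn_const _ (3 * m) m 0); last by blk ps1.
nia.
Qed.

Lemma util2 : util G (inord 2) (Xp ps2) = m * D.*2 - m.*2 + m * D.*2.
Proof.
rewrite util_inord //; last by fstL ps2.
rewrite split4.
rewrite (@sumn_const _ 0 m (D.*2 - 2)); last by blk ps2.
rewrite (@sumn_const _ m m 0); last by blk ps2.
rewrite (@sumn_const _ m.*2 m 0); last by blk ps2.
rewrite (@sumn_const _ (3 * m) m D.*2); last by blk ps2.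
nia.
Qed.

Lemma ord3 (i : 'I_3) k : (k <= 2)%N -> (i : nat) == k -> i = inord k.
Proof. by move=> hk /eqP e; apply: val_inj; rewrite /= inordK // e ltnS. Qed.

Lemma sum_usupp d (out : 'I_d -> {set 'I_NV}) (s : seq ('I_NV + 'I_d)) :
  count (supp_patient G d (inord 0)) s + count (supp_patient G d (inord 1)) s +
  count (supp_patient G d (inord 2)) s = count (fun x => getl x) s.
Proof.
elim: s => [|x s IH] //=; rewrite -IH.
case: x => [v|a] /=; last lia.
rewrite /isPatient /= inE /=.
have h : forall k, (k <= 2)%N -> (orgF v == inord k) = ((orgF v : nat) == k).
  by move=> k hk; apply/eqP/eqP => [->|e]; [rewrite inordK | apply: ord3 => //; apply/eqP].
rewrite !h //; case: (orgF v) => [[|[|[|k]]] hk] //=; lia.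
Qed.

Lemma exchange_ext (T : eqType) (e : rel T) Dl (W1 W2 : pred T) X :
  (forall v, W1 v = W2 v) -> exchange e Dl W1 X = exchange e Dl W2 X.
Proof. by move=> h; rewrite /exchange (eq_all h). Qed.

Lemma mk_block (P' : pred 'I_3) ps (ui : 'I_3 -> nat) : valid_ps P' ps -> (exists i, P' i) ->
  (forall i, P' i -> ui i < util G i (Xp ps))%N -> blocks G D [set i | P' i] ui.
Proof.
move=> hv [i0 hi0] hu; split.
  by apply/set0Pn; exists i0; rewrite inE.
exists (Xp ps); split.
  rewrite (@exchange_ext _ (compat G) D _ (fun v => P' (orgF v)) (Xp ps)); first exact: Xp_exchange.
  by move=> v; rewrite inE.
by move=> i; rewrite inE; apply: hu.
Qed.

End Cons.

Lemma pairstep (m X Y ui uj : nat) :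
  (forall z, z <= m -> X - z <= ui \/ Y + z <= uj)%N ->
  (X <= ui \/ X + Y <= ui + uj + 1 \/ Y + m <= uj)%N.
Proof.
move=> p; case: (leqP (uj.+1 - Y) m) => hz.
  have := p _ hz; lia.
right; right; lia.
Qed.

Lemma arith (m q d MD u0 u1 u2 : nat) : m = 4 * q -> (2 <= q)%N -> (d <= q)%N -> (4 * m <= MD)%N ->
  (u0 + u1 + u2 <= 4 * MD + d)%N ->
  (MD <= u0)%N -> (MD <= u1)%N -> (MD - 2 * m + MD <= u2)%N ->
  (forall z, z <= m -> MD + m - z <= u0 \/ MD + m + z <= u1)%N ->
  (forall z, z <= m -> MD + m - z <= u1 \/ MD - m + MD + z <= u2)%N ->
  (forall z, z <= m -> MD - m + MD - z <= u2 \/ MD + m + z <= u0)%N -> False.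
Proof.
move=> hm hq hd hML ht h0 h1 h2 /pairstep p01 /pairstep p12 /pairstep p20.
case: p01 => a; case: p12 => b; case: p20 => c; lia.
Qed.

Lemma inP (k : nat) : (k <= 2)%N -> ((inord k : 'I_3) : nat) = k.
Proof. by move=> h; rewrite inordK. Qed.

Lemma core_empty D q : (2 <= D)%N -> (2 <= q)%N -> ~ supp_core_nonempty (G D (4 * q)) D q.
Proof.
move=> HD hq [d [out [hd [X [HXe Hnb]]]]].
set m := 4 * q.
have Hm : (0 < m)%N by rewrite /m; lia.
set MD := m * D.*2.
pose u (i : 'I_3) := usupp (G D m) d i X.
have Hs : (u (inord 0) + u (inord 1) + u (inord 2) <= 4 * MD + d)%N.
  have := total_bound HD Hm HXe; rewrite -(sum_usupp HD Hm out).
  have -> : (NV D m - NC m = 4 * MD)%N by rewrite (NVE HD Hm) (NCE HD Hm) /L /MD; nia.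
  by [].
have p01 : forall z, (z <= m)%N -> (MD + m - z <= u (inord 0) \/ MD + m + z <= u (inord 1))%N.
  move=> z hz; case: (leqP (MD + m - z) (u (inord 0))) => h0; [by left|].
  case: (leqP (MD + m + z) (u (inord 1))) => h1; [by right|].
  exfalso; apply: (Hnb _ (mk_block HD Hm (valid01 HD Hm hz) _ _)).
    by exists (inord 0); rewrite inP.
  by move=> i /orP [/ord3 -> | /ord3 ->] //; rewrite ?util01_0 ?util01_1.
have p12 : forall z, (z <= m)%N -> (MD + m - z <= u (inord 1) \/ MD - m + MD + z <= u (inord 2))%N.
  move=> z hz; case: (leqP (MD + m - z) (u (inord 1))) => h0; [by left|].
  case: (leqP (MD - m + MD + z) (u (inord 2))) => h1; [by right|].
  exfalso; apply: (Hnb _ (mk_block HD Hm (valid12 HD Hm hz) _ _)).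
    by exists (inord 1); rewrite inP.
  by move=> i /orP [/ord3 -> | /ord3 ->] //; rewrite ?util12_1 ?util12_2.
have p20 : forall z, (z <= m)%N -> (MD - m + MD - z <= u (inord 2) \/ MD + m + z <= u (inord 0))%N.
  move=> z hz; case: (leqP (MD - m + MD - z) (u (inord 2))) => h0; [by left|].
  case: (leqP (MD + m + z) (u (inord 0))) => h1; [by right|].
  exfalso; apply: (Hnb _ (mk_block HD Hm (valid20 HD Hm hz) _ _)).
    by exists (inord 2); rewrite inP.
  by move=> i /orP [/ord3 -> | /ord3 ->] //; rewrite ?util20_2 ?util20_0.
have s0 : (MD <= u (inord 0))%N.
  case: (leqP MD (u (inord 0))) => // h0; exfalso.
  apply: (Hnb _ (mk_block HD Hm (valid0 HD Hm) _ _)); first by exists (inord 0); rewrite inP.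
  by move=> i /ord3 -> //; rewrite util0.
have s1 : (MD <= u (inord 1))%N.
  case: (leqP MD (u (inord 1))) => // h0; exfalso.
  apply: (Hnb _ (mk_block HD Hm (valid1 HD Hm) _ _)); first by exists (inord 1); rewrite inP.
  by move=> i /ord3 -> //; rewrite util1.
have s2 : (MD - 2 * m + MD <= u (inord 2))%N.
  case: (leqP (MD - 2 * m + MD) (u (inord 2))) => // h0; exfalso.
  apply: (Hnb _ (mk_block HD Hm (valid2 HD Hm) _ _)); first by exists (inord 2); rewrite inP.
  by move=> i /ord3 -> //; rewrite util2 -/MD -/m; move: h0; rewrite /u; lia.
apply: (arith (m := m) (q := q) (d := d) (MD := MD)) Hs s0 s1 s2 p01 p12 p20 => //.
rewrite /MD; nia.
Qed.

Theorem mainTheorem4 :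
  forall Delta : nat, (2 <= Delta)%N ->
  exists kappa : rat, (0 < kappa)%R /\
    forall M : nat, exists G : economy,
      [/\ nOrg G = 3, (M <= nV G)%N &
          ~ supp_core_nonempty G Delta
              (absz (Num.floor (kappa * (nV G)%:R)%R))].
Proof.
move=> Delta HD.
exists ((16 * Delta.*2.+1)%:R^-1)%R; split.
  by rewrite invr_gt0 ltr0n muln_gt0.
move=> M; exists (G Delta (4 * M.+2)).
have Hm : (0 < 4 * M.+2)%N by lia.
have eNV : nV (G Delta (4 * M.+2)) = (16 * Delta.*2.+1 * M.+2)%N.
  rewrite /= (NVE HD Hm) (NCE HD Hm) /L; lia.
split => //; first by rewrite eNV; nia.
have -> : absz (Num.floor (((16 * Delta.*2.+1)%:R^-1 : rat) * (nV (G Delta (4 * M.+2)))%:R)%R) = M.+2.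
  rewrite eNV (natrM _ (16 * Delta.*2.+1) M.+2) mulKf ?pnatr_eq0 ?muln_eq0 //.
  have -> : ((M.+2)%:R : rat)%R = ((M.+2)%:Z)%:~R%R by [].
  by rewrite intrKfloor.
exact: core_empty.
Qed.
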